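(* Let $m$ be an odd positive integer and let $r,s\in\mathbb{Z}$ satisfy $2^{-1}+r^2+s^2\equiv 0\pmod m$, where $2^{-1}$ is the inverse of $2$ modulo $m$. Every $\mathbf{q}\in H_{1,2,2}$ is congruent modulo $mH_{1,2,2}$ to an element $q_1+q_2\mathbf{i}+q_3\sqrt2\,\mathbf{j}+q_4\sqrt2\,\mathbf{k}$ with $q_1,\dots,q_4\in\mathbb{Z}$; define $$\tau(\mathbf{q})=\begin{pmatrix}\alpha&\beta\\ \gamma&\delta\end{pmatrix},\quad \alpha=q_1-2rq_3-2sq_4,\ \beta=q_2-2sq_3+2rq_4,\ \gamma=-q_2-2sq_3+2rq_4,\ \delta=q_1+2rq_3+2sq_4,$$ with entries taken modulo $m$. Then $\tau$ is a well-defined ring isomorphism from $H_{1,2,2}/mH_{1,2,2}$ onto the ring $M_2(\mathbb{Z}/m\mathbb{Z})$ of $2\times2$ matrices over $\mathbb{Z}/m\mathbb{Z}$, and $\det\tau(\mathbf{q})\equiv N(\mathbf{q})\pmod m$ for all $\mathbf{q}\in H_{1,2,2}$.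
   Context: Let $\mathbf{i},\mathbf{j},\mathbf{k}$ be the standard quaternion units; $\overline{\mathbf{q}}$ is quaternion conjugation and $N(\mathbf{q})=\mathbf{q}\overline{\mathbf{q}}$. $H_{1,2,2}$ is the subring of the quaternions equal to the $\mathbb{Z}$-module generated by $\mathbf{v}_1=1$, $\mathbf{v}_2=\mathbf{i}$, $\mathbf{v}_3=\tfrac12(1+\mathbf{i}+\sqrt2\,\mathbf{j})$, $\mathbf{v}_4=\tfrac12(1+\mathbf{i}+\sqrt2\,\mathbf{k})$; the norm takes integer values on it. Such $r,s$ exist for every odd $m$. *)

(* Defs.v *)
(* Real quaternions over a real closed field R (contains sqrt 2). *)
From HB Require Import structures.
From mathcomp Require Import all_boot all_order all_algebra.
Set Implicit Arguments. Unset Strict Implicit. Unset Printing Implicit Defensive.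
Import Order.TTheory GRing.Theory Num.Theory.
Local Open Scope ring_scope.

Record quat (R : Type) := Quat { qr : R; qi : R; qj : R; qk : R }.
Arguments Quat {R}.

Section Quaternions.
Variable R : rcfType.

Definition qadd (p q : quat R) : quat R :=
  Quat (qr p + qr q) (qi p + qi q) (qj p + qj q) (qk p + qk q).
Definition qopp (p : quat R) : quat R := Quat (- qr p) (- qi p) (- qj p) (- qk p).
Definition qsub (p q : quat R) : quat R := qadd p (qopp q).
Definition qmul (p q : quat R) : quat R :=
  Quat (qr p * qr q - qi p * qi q - qj p * qj q - qk p * qk q)
       (qr p * qi q + qi p * qr q + qj p * qk q - qk p * qj q)
       (qr p * qj q - qi p * qk q + qj p * qr q + qk p * qi q)
       (qr p * qk q + qi p * qj q - qj p * qi q + qk p * qr q).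
Definition qconj (p : quat R) : quat R := Quat (qr p) (- qi p) (- qj p) (- qk p).
Definition qscal (c : R) : quat R := Quat c 0 0 0.
Definition qone : quat R := qscal 1.
Definition qzscale (n : int) (p : quat R) : quat R :=
  Quat (n%:~R * qr p) (n%:~R * qi p) (n%:~R * qj p) (n%:~R * qk p).
Definition qnorm (p : quat R) : quat R := qmul p (qconj p).

Definition sqrt2 : R := Num.sqrt 2.

(* generators of H_{1,2,2} *)
Definition v1 : quat R := qone.
Definition v2 : quat R := Quat 0 1 0 0.
Definition v3 : quat R := Quat (1/2) (1/2) (sqrt2 / 2) 0.
Definition v4 : quat R := Quat (1/2) (1/2) 0 (sqrt2 / 2).

Definition zcomb (a b c d : int) : quat R :=
  qadd (qadd (qzscale a v1) (qzscale b v2)) (qadd (qzscale c v3) (qzscale d v4)).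

Definition inH (q : quat R) : Prop := exists a b c d : int, q = zcomb a b c d.
Definition inmH (m : nat) (q : quat R) : Prop :=
  exists a b c d : int, q = qzscale m%:Z (zcomb a b c d).

Definition coords := (int * int * int * int)%type.

Definition std (x : coords) : quat R :=
  let '(x1, x2, x3, x4) := x in
  Quat x1%:~R x2%:~R (x3%:~R * sqrt2) (x4%:~R * sqrt2).

Definition rep (m : nat) (q : quat R) (x : coords) : Prop := inmH m (qsub q (std x)).
End Quaternions.

(* the integer matrix whose reduction mod m is tau(q) *)
Definition tau (r s : int) (x : coords) : 'M[int]_2 :=
  let '(q1, q2, q3, q4) := x in
  let a := q1 - 2 * r * q3 - 2 * s * q4 in
  let b := q2 - 2 * s * q3 + 2 * r * q4 in
  let c := - q2 - 2 * s * q3 + 2 * r * q4 in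
  let d := q1 + 2 * r * q3 + 2 * s * q4 in
  \matrix_(i < 2, j < 2)
    if (i : nat) == 0%N then (if (j : nat) == 0%N then a else b)
    else (if (j : nat) == 0%N then c else d).

(* equality in M_2(Z/mZ) of reductions of integer matrices *)
Definition eqmx_mod (m : nat) (A B : 'M[int]_2) : Prop :=
  forall i j : 'I_2, (A i j = B i j %[mod m%:Z])%Z.

Definition inv2 (m : nat) : int := ((m.+1) %/ 2)%N%:Z.

(* Main.v *)
Require Import Defs.
From HB Require Import structures.
From mathcomp Require Import all_boot all_order all_algebra.
From mathcomp Require Import ring lra zify.
Import Order.TTheory GRing.Theory Num.Theory.
Local Open Scope ring_scope.

Section Q.
Variable R : rcfType.
Local Notation t := (sqrt2 R).

Lemma t2 : t * t = 2.
Proof. by rewrite -expr2 /sqrt2 sqr_sqrtr // ler0n. Qed.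

Lemma tneq0 : t != 0.
Proof. apply/eqP=> h; have := t2; rewrite h mul0r => /eqP; by rewrite eq_sym pnatr_eq0. Qed.

Definition Qf (A B C D : R) : quat R := Quat A B (C * t) (D * t).

Lemma qmulQf A B C D A' B' C' D' :
  qmul (Qf A B C D) (Qf A' B' C' D') =
  Qf (A*A' - B*B' - 2*C*C' - 2*D*D') (A*B' + B*A' + 2*C*D' - 2*D*C')
     (A*C' - B*D' + C*A' + D*B') (A*D' + B*C' - C*B' + D*A').
Proof.
rewrite /qmul /Qf /=; congr Quat; rewrite -?t2; ring.
Qed.

Lemma Qf_inj A B C D A' B' C' D' : Qf A B C D = Qf A' B' C' D' ->
  [/\ A = A', B = B', C = C' & D = D'].
Proof. by case=> -> -> /(mulIf tneq0) -> /(mulIf tneq0) ->. Qed.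

Lemma zcombE a b c d : zcomb R a b c d =
  Qf (a%:~R + (c%:~R + d%:~R)/2) (b%:~R + (c%:~R + d%:~R)/2) (c%:~R/2) (d%:~R/2).
Proof.
rewrite /zcomb /qadd /qzscale /v1 /v2 /v3 /v4 /qone /qscal /Qf /=.
by congr Quat; field.
Qed.

Lemma zcomb_inj a b c d a' b' c' d' : zcomb R a b c d = zcomb R a' b' c' d' ->
  [/\ a = a', b = b', c = c' & d = d'].
Proof.
rewrite !zcombE => /Qf_inj [h1 h2 h3 h4].
have hc : c = c'.
  apply: (@intr_inj R). have := congr1 (fun z => z * 2) h3.
  by rewrite !mulfVK // pnatr_eq0.
have hd : d = d'.
  apply: (@intr_inj R). have := congr1 (fun z => z * 2) h4.
  by rewrite !mulfVK // pnatr_eq0.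
subst c' d'; split => //; apply: (@intr_inj R); exact: (addIr _ h1) || exact: (addIr _ h2).
Qed.

Lemma zcomb_add a b c d a' b' c' d' :
  qadd (zcomb R a b c d) (zcomb R a' b' c' d') = zcomb R (a+a') (b+b') (c+c') (d+d').
Proof. rewrite !zcombE /qadd /Qf /=; by congr Quat; field. Qed.

Lemma zcomb_sub a b c d a' b' c' d' :
  qsub (zcomb R a b c d) (zcomb R a' b' c' d') = zcomb R (a-a') (b-b') (c-c') (d-d').
Proof. rewrite !zcombE /qsub /qadd /qopp /Qf /=; by congr Quat; field. Qed.

Lemma zcomb_scale n a b c d :
  qzscale n (zcomb R a b c d) = zcomb R (n*a) (n*b) (n*c) (n*d).
Proof. rewrite !zcombE /qzscale /Qf /=; by congr Quat; field. Qed.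

Lemma std_zcomb x1 x2 x3 x4 :
  std R (x1, x2, x3, x4) = zcomb R (x1-x3-x4) (x2-x3-x4) (2*x3) (2*x4).
Proof. rewrite !zcombE /std /Qf /=; by congr Quat; field. Qed.

Lemma qone_zcomb : qone R = zcomb R 1 0 0 0.
Proof. rewrite !zcombE /qone /qscal /Qf /=; by congr Quat; field. Qed.

Lemma zcomb_mul a b c d a' b' c' d' :
  qmul (zcomb R a b c d) (zcomb R a' b' c' d') =
  zcomb R (a*a' - b*b' - b*c' - b'*d - c*c' - d*d' - d*c')
          (a*b' + b*a' + b*d' + b'*c + c*d' - d*c')
          (a*c' - b*d' + a'*c + b'*d + (c+d)*c')
          (a*d' + b*c' - b'*c + a'*d + d*(c'+d')).
Proof. rewrite !zcombE qmulQf /Qf; by congr Quat; field. Qed.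

Lemma qnorm_zcomb a b c d :
  qnorm (zcomb R a b c d) = qscal (a^+2 + b^+2 + (a+b)*(c+d) + c^+2 + d^+2 + c*d)%:~R.
Proof.
rewrite /qnorm zcombE.
have -> : forall A B C D, qconj (Qf A B C D) = Qf A (-B) (-C) (-D).
  by move=> A B C D; rewrite /qconj /Qf /=; congr Quat; ring.
rewrite qmulQf /Qf /qscal; by congr Quat; field.
Qed.
End Q.

Lemma forall_I2 (P : 'I_2 -> 'I_2 -> Prop) :
  P ord0 ord0 -> P ord0 ord_max -> P ord_max ord0 -> P ord_max ord_max -> forall i j, P i j.
Proof.
have e0 : forall H : (0 < 2)%N, Ordinal H = ord0 by move=> H; apply: val_inj.
have e1 : forall H : (1 < 2)%N, Ordinal H = ord_max by move=> H; apply: val_inj.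
by move=> H00 H01 H10 H11 [[|[|i]] Hi] [[|[|j]] Hj] //; rewrite ?e0 ?e1.
Qed.

Lemma det2 (A : 'M[int]_2) : \det A = A ord0 ord0 * A ord_max ord_max - A ord0 ord_max * A ord_max ord0.
Proof.
rewrite (expand_det_row _ ord0) !big_ord_recl big_ord0 /cofactor !det_mx11 !mxE /=.
have -> : lift ord0 (0 : 'I_1) = ord_max :> 'I_2 by apply: val_inj.
have -> : lift ord_max (0 : 'I_1) = ord0 :> 'I_2 by apply: val_inj.
rewrite /= expr0 expr1; ring.
Qed.

Lemma mul2 (A B : 'M[int]_2) i j : (A *m B) i j = A i ord0 * B ord0 j + A i ord_max * B ord_max j.
Proof.
rewrite mxE !big_ord_recl big_ord0 addr0.
by have -> : lift ord0 (ord0 : 'I_1) = ord_max :> 'I_2 by apply: val_inj.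
Qed.

Definition cg (M a b : int) := exists k, a = b + M * k.

Lemma comb5 (c1 c2 c3 c4 c5 : int) {X Y X1 Y1 X2 Y2 X3 Y3 X4 Y4 X5 Y5 : int} :
 X1 = Y1 -> X2 = Y2 -> X3 = Y3 -> X4 = Y4 -> X5 = Y5 ->
 X - Y = c1*(X1-Y1) + c2*(X2-Y2) + c3*(X3-Y3) + c4*(X4-Y4) + c5*(X5-Y5) -> X = Y.
Proof.
move=> -> -> -> -> ->; rewrite !subrr !mulr0 !addr0 => /eqP; rewrite subr_eq0 => /eqP //.
Qed.

Notation Z0 := (erefl (0:int)).

Lemma cg_refl M a : cg M a a.
Proof. by exists 0; rewrite mulr0 addr0. Qed.
Lemma cg_sym M a b : cg M a b -> cg M b a.
Proof. by case=> k ->; exists (-k); ring. Qed.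
Lemma cg_trans M a b c : cg M a b -> cg M b c -> cg M a c.
Proof. by case=> k -> [l ->]; exists (l + k); ring. Qed.

Arguments cg_trans {M a b c}.
Arguments cg_sym {M a b}.

Section Int.
Variables (h r s : int).
Local Notation M := (2*h-1).

Lemma Sinj x1 x2 x3 x4 y1 y2 y3 y4 :
 cg M (x1-x3-x4) (y1-y3-y4) -> cg M (x2-x3-x4) (y2-y3-y4) ->
 cg M (2*x3) (2*y3) -> cg M (2*x4) (2*y4) ->
 [/\ cg M x1 y1, cg M x2 y2, cg M x3 y3 & cg M x4 y4].
Proof.
case=> k1 H1 [k2 H2] [k3 H3] [k4 H4].
pose w3 := h*k3 - (x3-y3); pose w4 := h*k4 - (x4 - y4).
split; [exists (k1 + w3 + w4) | exists (k2 + w3 + w4) | exists w3 | exists w4].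
- by apply: (comb5 1 h h 0 0 H1 H3 H4 Z0 Z0); rewrite /w3 /w4; ring.
- by apply: (comb5 1 h h 0 0 H2 H3 H4 Z0 Z0); rewrite /w3 /w4; ring.
- by apply: (comb5 h 0 0 0 0 H3 Z0 Z0 Z0 Z0); rewrite /w3 /w4; ring.
- by apply: (comb5 h 0 0 0 0 H4 Z0 Z0 Z0 Z0); rewrite /w3 /w4; ring.
Qed.

Definition mcg (A B : 'M[int]_2) := forall i j, cg M (A i j) (B i j).

Lemma mcg_trans A B C : mcg A B -> mcg B C -> mcg A C.
Proof. by move=> H1 H2 i j; apply: cg_trans (H1 i j) (H2 i j). Qed.

Lemma tau_cg x1 x2 x3 x4 y1 y2 y3 y4 :
  cg M x1 y1 -> cg M x2 y2 -> cg M x3 y3 -> cg M x4 y4 ->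
  mcg (tau r s (x1,x2,x3,x4)) (tau r s (y1,y2,y3,y4)).
Proof.
case=> k1 -> [k2 ->] [k3 ->] [k4 ->]; apply: forall_I2; rewrite !mxE /=.
- by exists (k1 - 2*r*k3 - 2*s*k4); ring.
- by exists (k2 - 2*s*k3 + 2*r*k4); ring.
- by exists (-k2 - 2*s*k3 + 2*r*k4); ring.
- by exists (k1 + 2*r*k3 + 2*s*k4); ring.
Qed.

Lemma tau_add x1 x2 x3 x4 y1 y2 y3 y4 :
  tau r s (x1+y1, x2+y2, x3+y3, x4+y4) = tau r s (x1,x2,x3,x4) + tau r s (y1,y2,y3,y4).
Proof.
apply/matrixP; apply: forall_I2; rewrite !mxE /=; ring.
Qed.

Lemma tau_one : tau r s (1,0,0,0) = 1%:M.
Proof. by apply/matrixP; apply: forall_I2; rewrite !mxE /=; ring. Qed.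

Variable ke : int.
Hypothesis He : 1 + 2*r^+2 + 2*s^+2 = M * ke.

Lemma tau_mul x1 x2 x3 x4 y1 y2 y3 y4 :
  mcg (tau r s (x1*y1 - x2*y2 - 2*x3*y3 - 2*x4*y4, x1*y2 + x2*y1 + 2*x3*y4 - 2*x4*y3,
                x1*y3 - x2*y4 + x3*y1 + x4*y2, x1*y4 + x2*y3 - x3*y2 + x4*y1))
      (tau r s (x1,x2,x3,x4) *m tau r s (y1,y2,y3,y4)).
Proof.
pose Q0 := 2*(x3*y3 + x4*y4); pose Q1 := 2*(x4*y3 - x3*y4).
apply: forall_I2; rewrite mul2 !mxE /=.
- by exists (-ke*Q0); apply: (comb5 (-Q0) 0 0 0 0 He Z0 Z0 Z0 Z0); rewrite /Q0; ring.
- by exists (-ke*Q1); apply: (comb5 (-Q1) 0 0 0 0 He Z0 Z0 Z0 Z0); rewrite /Q1; ring.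
- by exists (ke*Q1); apply: (comb5 Q1 0 0 0 0 He Z0 Z0 Z0 Z0); rewrite /Q1; ring.
- by exists (-ke*Q0); apply: (comb5 (-Q0) 0 0 0 0 He Z0 Z0 Z0 Z0); rewrite /Q0; ring.
Qed.

Lemma tau_inj x1 x2 x3 x4 y1 y2 y3 y4 :
  mcg (tau r s (x1,x2,x3,x4)) (tau r s (y1,y2,y3,y4)) ->
  [/\ cg M x1 y1, cg M x2 y2, cg M x3 y3 & cg M x4 y4].
Proof.
move=> H.
have [k1 H1] := H ord0 ord0; have [k2 H2] := H ord0 ord_max.
have [k3 H3] := H ord_max ord0; have [k4 H4] := H ord_max ord_max.
move: H1 H2 H3 H4; rewrite !mxE /= => H1 H2 H3 H4.
pose d3 := x3 - y3; pose d4 := x4 - y4.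
pose U := r*d3 + s*d4; pose V := -s*d3 + r*d4.
pose wU := h*(k4-k1) - 2*U; pose wV := h*(k2+k3) - 2*V.
split.
- exists (h*(k1+k4) - (x1-y1)).
  by apply: (comb5 h 0 0 h 0 H1 H2 H3 H4 Z0); ring.
- exists (h*(k2-k3) - (x2-y2)).
  by apply: (comb5 0 h (-h) 0 0 H1 H2 H3 H4 Z0); ring.
- exists (ke*d3 - r*wU + s*wV).
  by apply: (comb5 (r*h) (s*h) (s*h) (-(r*h)) d3 H1 H2 H3 H4 He); rewrite /wU /wV /U /V /d3 /d4; ring.
- exists (ke*d4 - s*wU - r*wV).
  by apply: (comb5 (s*h) (-(r*h)) (-(r*h)) (-(s*h)) d4 H1 H2 H3 H4 He); rewrite /wU /wV /U /V /d3 /d4; ring.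
Qed.

Lemma tau_surj (A : 'M[int]_2) : exists x1 x2 x3 x4, mcg (tau r s (x1,x2,x3,x4)) A.
Proof.
set a00 := A ord0 ord0; set a01 := A ord0 ord_max; set a10 := A ord_max ord0; set a11 := A ord_max ord_max.
pose U := h^+2*(a11 - a00); pose V := h^+2*(a01 + a10).
exists (h*(a00+a11)), (h*(a01-a10)), (-2*(r*U - s*V)), (-2*(s*U + r*V)).
apply: forall_I2; rewrite !mxE /= -/a00 -/a01 -/a10 -/a11.
- exists (a00*(h+1) - h*a11 + 2*ke*h^+2*(a11-a00)).
  by apply: (comb5 (2*h^+2*(a11-a00)) 0 0 0 0 He Z0 Z0 Z0 Z0); rewrite /U /V; ring.
- exists (a01*(h+1) + h*a10 - 2*ke*h^+2*(a01+a10)).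
  by apply: (comb5 (-(2*h^+2*(a01+a10))) 0 0 0 0 He Z0 Z0 Z0 Z0); rewrite /U /V; ring.
- exists (h*a01 + (h+1)*a10 - 2*ke*h^+2*(a01+a10)).
  by apply: (comb5 (-(2*h^+2*(a01+a10))) 0 0 0 0 He Z0 Z0 Z0 Z0); rewrite /U /V; ring.
- exists (-(h*a00) + (h+1)*a11 - 2*ke*h^+2*(a11-a00)).
  by apply: (comb5 (-(2*h^+2*(a11-a00))) 0 0 0 0 He Z0 Z0 Z0 Z0); rewrite /U /V; ring.
Qed.

Definition Nf (a b c d : int) := a^+2 + b^+2 + (a+b)*(c+d) + c^+2 + d^+2 + c*d.

Lemma tau_det x1 x2 x3 x4 k1 k2 k3 k4 :
  cg M (\det (tau r s (x1,x2,x3,x4)))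
     (Nf (x1-x3-x4 + M*k1) (x2-x3-x4 + M*k2) (2*x3 + M*k3) (2*x4 + M*k4)).
Proof.
rewrite det2 !mxE /=.
pose a := x1-x3-x4; pose b := x2-x3-x4; pose c := 2*x3; pose d := 2*x4.
pose B := 2*a*k1 + 2*b*k2 + (a+b)*(k3+k4) + (k1+k2)*(c+d) + 2*c*k3 + 2*d*k4 + c*k4 + d*k3.
exists (-(B + M * Nf k1 k2 k3 k4) - 2*ke*(x3^+2+x4^+2)).
apply: (comb5 (-(2*(x3^+2+x4^+2))) 0 0 0 0 He Z0 Z0 Z0 Z0).
rewrite /Nf /B /a /b /c /d; ring.
Qed.
End Int.
Arguments Sinj {h x1 x2 x3 x4 y1 y2 y3 y4}.
Arguments tau_cg {h} r s {x1 x2 x3 x4 y1 y2 y3 y4}.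
Arguments tau_inj {h r s ke} He {x1 x2 x3 x4 y1 y2 y3 y4}.
Arguments tau_surj {h} r s {ke} He A.
Arguments tau_det {h r s ke} He x1 x2 x3 x4 k1 k2 k3 k4.
Arguments mcg_trans {h A B C}.
Arguments tau_mul {h} r s {ke} He x1 x2 x3 x4 y1 y2 y3 y4.


Lemma cg_sub0 M a b : cg M (a - b) 0 <-> cg M a b.
Proof. by split; case=> k Hk; exists k; [move/eqP: Hk; rewrite add0r subr_eq addrC => /eqP | rewrite Hk add0r; ring]. Qed.

Lemma cg4_sub0 M a b c d a' b' c' d' :
  [/\ cg M (a-a') 0, cg M (b-b') 0, cg M (c-c') 0 & cg M (d-d') 0] <->
  [/\ cg M a a', cg M b b', cg M c c' & cg M d d'].
Proof.
by split; case=> /cg_sub0 ? /cg_sub0 ? /cg_sub0 ? /cg_sub0 ?; split => //; apply/cg_sub0.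
Qed.

Section R2.
Variable R : rcfType.

Lemma inmH_zcomb m a b c d : inmH m (zcomb R a b c d) <->
  [/\ cg m a 0, cg m b 0, cg m c 0 & cg m d 0].
Proof.
split.
- case=> [k1 [k2 [k3 [k4]]]]; rewrite zcomb_scale => /zcomb_inj [-> -> -> ->].
  by split; [exists k1 | exists k2 | exists k3 | exists k4]; rewrite add0r.
- case=> [[k1 ->] [k2 ->] [k3 ->] [k4 ->]]; exists k1, k2, k3, k4.
  by rewrite zcomb_scale !add0r.
Qed.

Lemma rep_zcomb m a b c d x1 x2 x3 x4 : rep m (zcomb R a b c d) (x1,x2,x3,x4) <->
  [/\ cg m a (x1-x3-x4), cg m b (x2-x3-x4), cg m c (2*x3) & cg m d (2*x4)].
Proof.
rewrite /rep std_zcomb zcomb_sub inmH_zcomb; exact: cg4_sub0.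
Qed.
End R2.

Definition P1 (a b c d a' b' c' d' : int) := a*a' - b*b' - b*c' - b'*d - c*c' - d*d' - d*c'.
Definition P2 (a b c d a' b' c' d' : int) := a*b' + b*a' + b*d' + b'*c + c*d' - d*c'.
Definition P3 (a b c d a' b' c' d' : int) := a*c' - b*d' + a'*c + b'*d + (c+d)*c'.
Definition P4 (a b c d a' b' c' d' : int) := a*d' + b*c' - b'*c + a'*d + d*(c'+d').

Lemma rep_mul_int M a b c d a' b' c' d' x1 x2 x3 x4 y1 y2 y3 y4 :
 [/\ cg M a (x1-x3-x4), cg M b (x2-x3-x4), cg M c (2*x3) & cg M d (2*x4)] ->
 [/\ cg M a' (y1-y3-y4), cg M b' (y2-y3-y4), cg M c' (2*y3) & cg M d' (2*y4)] ->
 let z1 := x1*y1 - x2*y2 - 2*x3*y3 - 2*x4*y4 in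
 let z2 := x1*y2 + x2*y1 + 2*x3*y4 - 2*x4*y3 in
 let z3 := x1*y3 - x2*y4 + x3*y1 + x4*y2 in
 let z4 := x1*y4 + x2*y3 - x3*y2 + x4*y1 in
 [/\ cg M (P1 a b c d a' b' c' d') (z1-z3-z4), cg M (P2 a b c d a' b' c' d') (z2-z3-z4),
     cg M (P3 a b c d a' b' c' d') (2*z3) & cg M (P4 a b c d a' b' c' d') (2*z4)].
Proof.
case=> [[k1 ->] [k2 ->] [k3 ->] [k4 ->]] [[l1 ->] [l2 ->] [l3 ->] [l4 ->]] /=.
pose u1 := x1-x3-x4; pose u2 := x2-x3-x4; pose u3 := 2*x3; pose u4 := 2*x4.
pose v1 := y1-y3-y4; pose v2 := y2-y3-y4; pose v3 := 2*y3; pose v4 := 2*y4.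
split.
- exists (P1 k1 k2 k3 k4 v1 v2 v3 v4 + P1 u1 u2 u3 u4 l1 l2 l3 l4 + M * P1 k1 k2 k3 k4 l1 l2 l3 l4).
  rewrite /P1 /u1 /u2 /u3 /u4 /v1 /v2 /v3 /v4; ring.
- exists (P2 k1 k2 k3 k4 v1 v2 v3 v4 + P2 u1 u2 u3 u4 l1 l2 l3 l4 + M * P2 k1 k2 k3 k4 l1 l2 l3 l4).
  rewrite /P2 /u1 /u2 /u3 /u4 /v1 /v2 /v3 /v4; ring.
- exists (P3 k1 k2 k3 k4 v1 v2 v3 v4 + P3 u1 u2 u3 u4 l1 l2 l3 l4 + M * P3 k1 k2 k3 k4 l1 l2 l3 l4).
  rewrite /P3 /u1 /u2 /u3 /u4 /v1 /v2 /v3 /v4; ring.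
- exists (P4 k1 k2 k3 k4 v1 v2 v3 v4 + P4 u1 u2 u3 u4 l1 l2 l3 l4 + M * P4 k1 k2 k3 k4 l1 l2 l3 l4).
  rewrite /P4 /u1 /u2 /u3 /u4 /v1 /v2 /v3 /v4; ring.
Qed.

Lemma coords_uniq h a b c d a' b' c' d' x1 x2 x3 x4 y1 y2 y3 y4 :
 [/\ cg (2*h-1) a (x1-x3-x4), cg (2*h-1) b (x2-x3-x4), cg (2*h-1) c (2*x3) & cg (2*h-1) d (2*x4)] ->
 [/\ cg (2*h-1) a' (y1-y3-y4), cg (2*h-1) b' (y2-y3-y4), cg (2*h-1) c' (2*y3) & cg (2*h-1) d' (2*y4)] ->
 [/\ cg (2*h-1) a a', cg (2*h-1) b b', cg (2*h-1) c c' & cg (2*h-1) d d'] ->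
 [/\ cg (2*h-1) x1 y1, cg (2*h-1) x2 y2, cg (2*h-1) x3 y3 & cg (2*h-1) x4 y4].
Proof.
move=> [H1 H2 H3 H4] [G1 G2 G3 G4] [E1 E2 E3 E4]; apply: Sinj.
- exact: cg_trans (cg_sym H1) (cg_trans E1 G1).
- exact: cg_trans (cg_sym H2) (cg_trans E2 G2).
- exact: cg_trans (cg_sym H3) (cg_trans E3 G3).
- exact: cg_trans (cg_sym H4) (cg_trans E4 G4).
Qed.

Lemma coords_conv M a b c d a' b' c' d' x1 x2 x3 x4 y1 y2 y3 y4 :
 [/\ cg M a (x1-x3-x4), cg M b (x2-x3-x4), cg M c (2*x3) & cg M d (2*x4)] ->
 [/\ cg M a' (y1-y3-y4), cg M b' (y2-y3-y4), cg M c' (2*y3) & cg M d' (2*y4)] ->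
 [/\ cg M x1 y1, cg M x2 y2, cg M x3 y3 & cg M x4 y4] ->
 [/\ cg M a a', cg M b b', cg M c c' & cg M d d'].
Proof.
move=> [H1 H2 H3 H4] [G1 G2 G3 G4] [[k1 E1] [k2 E2] [k3 E3] [k4 E4]].
have S1 : cg M (x1-x3-x4) (y1-y3-y4) by exists (k1-k3-k4); rewrite E1 E3 E4; ring.
have S2 : cg M (x2-x3-x4) (y2-y3-y4) by exists (k2-k3-k4); rewrite E2 E3 E4; ring.
have S3 : cg M (2*x3) (2*y3) by exists (2*k3); rewrite E3; ring.
have S4 : cg M (2*x4) (2*y4) by exists (2*k4); rewrite E4; ring.
split.
- exact: cg_trans H1 (cg_trans S1 (cg_sym G1)).
- exact: cg_trans H2 (cg_trans S2 (cg_sym G2)).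
- exact: cg_trans H3 (cg_trans S3 (cg_sym G3)).
- exact: cg_trans H4 (cg_trans S4 (cg_sym G4)).
Qed.

Arguments coords_uniq {h a b c d a' b' c' d' x1 x2 x3 x4 y1 y2 y3 y4}.
Arguments coords_conv {M a b c d a' b' c' d' x1 x2 x3 x4 y1 y2 y3 y4}.
Arguments rep_mul_int {M a b c d a' b' c' d' x1 x2 x3 x4 y1 y2 y3 y4}.

Lemma mcg_eqmx m h A B : m%:Z = 2*h-1 -> mcg h A B -> eqmx_mod m A B.
Proof. by move=> hM H i j; have [k ->] := H i j; rewrite -hM addrC mulrC modzMDl. Qed.

Lemma cg_mod M a b : cg M a b -> (a = b %[mod M])%Z.
Proof. by case=> k ->; rewrite addrC mulrC modzMDl. Qed.

Theorem theorem26 (R : rcfType) (m : nat) (r s : int) :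
  odd m -> (0 < m)%N ->
  (inv2 m + r ^+ 2 + s ^+ 2 = 0 %[mod m%:Z])%Z ->
  (* every element of H has an integer representative mod mH *)
  (forall q : quat R, inH q -> exists x : coords, rep m q x) /\
  (* well-defined on H / mH *)
  (forall (p q : quat R) (x y : coords), inH p -> inH q -> inmH m (qsub p q) ->
     rep m p x -> rep m q y -> eqmx_mod m (tau r s x) (tau r s y)) /\
  (* additive *)
  (forall (p q : quat R) (x y z : coords), inH p -> inH q ->
     rep m p x -> rep m q y -> rep m (qadd p q) z ->
     eqmx_mod m (tau r s z) (tau r s x + tau r s y)) /\
  (* multiplicative *)
  (forall (p q : quat R) (x y z : coords), inH p -> inH q ->
     rep m p x -> rep m q y -> rep m (qmul p q) z ->
     eqmx_mod m (tau r s z) (tau r s x *m tau r s y)) /\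
  (* unital *)
  (forall x : coords, rep m (qone R) x -> eqmx_mod m (tau r s x) 1%:M) /\
  (* injective on H / mH *)
  (forall (p q : quat R) (x y : coords), inH p -> inH q ->
     rep m p x -> rep m q y -> eqmx_mod m (tau r s x) (tau r s y) ->
     inmH m (qsub p q)) /\
  (* surjective onto M_2(Z/mZ) *)
  (forall M : 'M[int]_2, exists (q : quat R) (x : coords),
     [/\ inH q, rep m q x & eqmx_mod m (tau r s x) M]) /\
  (* det tau(q) = N(q) mod m *)
  (forall (q : quat R) (x : coords), inH q -> rep m q x ->
     exists n : int, qnorm q = qscal n%:~R /\ (\det (tau r s x) = n %[mod m%:Z])%Z).
Proof.
move=> Hodd Hpos Hcong.
set h := inv2 m.
have hM : m%:Z = 2*h - 1.
  rewrite /h /inv2.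
  have : (m.+1 %/ 2 * 2 = m.+1)%N by rewrite divnK // dvdn2 /= Hodd.
  lia.
have [ke He] : exists ke, 1 + 2*r^+2 + 2*s^+2 = (2*h-1)*ke.
  move/eqP: Hcong; rewrite eqz_mod_dvd subr0 => /dvdzP [q Hq].
  rewrite hM in Hq; exists (2*q - 1).
  by apply: (comb5 2 0 0 0 0 Hq Z0 Z0 Z0 Z0); ring.
split.
  move=> q [a [b [c [d ->]]]].
  exists (a + h*(c+d), b + h*(c+d), h*c, h*d).
  apply/rep_zcomb; rewrite hM.
  by split; [exists 0 | exists 0 | exists (-c) | exists (-d)]; ring.
split.
  move=> p q [[[x1 x2] x3] x4] [[[y1 y2] y3] y4] [a [b [c [d ->]]]] [a' [b' [c' [d' ->]]]].
  rewrite zcomb_sub inmH_zcomb cg4_sub0 hM => Hu /rep_zcomb Hx /rep_zcomb Hy.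
  rewrite hM in Hx Hy.
  have [X1 X2 X3 X4] := coords_uniq Hx Hy Hu.
  exact: mcg_eqmx hM (tau_cg r s X1 X2 X3 X4).
split.
  move=> p q [[[x1 x2] x3] x4] [[[y1 y2] y3] y4] [[[z1 z2] z3] z4]
    [a [b [c [d ->]]]] [a' [b' [c' [d' ->]]]].
  rewrite zcomb_add => /rep_zcomb Hx /rep_zcomb Hy /rep_zcomb Hz.
  rewrite hM in Hx Hy Hz.
  have Hxy : [/\ cg (2*h-1) (a+a') ((x1+y1)-(x3+y3)-(x4+y4)), cg (2*h-1) (b+b') ((x2+y2)-(x3+y3)-(x4+y4)),
     cg (2*h-1) (c+c') (2*(x3+y3)) & cg (2*h-1) (d+d') (2*(x4+y4))].
    case: Hx => [[k1 ->] [k2 ->] [k3 ->] [k4 ->]]; case: Hy => [[l1 ->] [l2 ->] [l3 ->] [l4 ->]].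
    by split; [exists (k1+l1) | exists (k2+l2) | exists (k3+l3) | exists (k4+l4)]; ring.
  have [X1 X2 X3 X4] := coords_uniq Hz Hxy (And4 (cg_refl _ _) (cg_refl _ _) (cg_refl _ _) (cg_refl _ _)).
  by rewrite -tau_add; exact: mcg_eqmx hM (tau_cg r s X1 X2 X3 X4).
split.
  move=> p q [[[x1 x2] x3] x4] [[[y1 y2] y3] y4] [[[z1 z2] z3] z4]
    [a [b [c [d ->]]]] [a' [b' [c' [d' ->]]]].
  rewrite zcomb_mul => /rep_zcomb Hx /rep_zcomb Hy /rep_zcomb Hz.
  rewrite hM in Hx Hy Hz.
  have Hxy := rep_mul_int Hx Hy.
  rewrite /= -/(P1 a b c d a' b' c' d') -/(P2 a b c d a' b' c' d')
     -/(P3 a b c d a' b' c' d') -/(P4 a b c d a' b' c' d') in Hz.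
  have [X1 X2 X3 X4] := coords_uniq Hz Hxy (And4 (cg_refl _ _) (cg_refl _ _) (cg_refl _ _) (cg_refl _ _)).
  apply: mcg_eqmx hM _.
  exact: mcg_trans (tau_cg r s X1 X2 X3 X4) (tau_mul r s He _ _ _ _ _ _ _ _).
split.
  move=> [[[x1 x2] x3] x4]; rewrite qone_zcomb => /rep_zcomb Hx; rewrite hM in Hx.
  have H1 : [/\ cg (2*h-1) 1 (1-0-0), cg (2*h-1) 0 (0-0-0), cg (2*h-1) 0 (2*0) & cg (2*h-1) 0 (2*0)].
    by split; exists 0; ring.
  have [X1 X2 X3 X4] := coords_uniq Hx H1 (And4 (cg_refl _ _) (cg_refl _ _) (cg_refl _ _) (cg_refl _ _)).
  by rewrite -(tau_one r s); exact: mcg_eqmx hM (tau_cg r s X1 X2 X3 X4).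
split.
  move=> p q [[[x1 x2] x3] x4] [[[y1 y2] y3] y4] [a [b [c [d ->]]]] [a' [b' [c' [d' ->]]]].
  move=> /rep_zcomb Hx /rep_zcomb Hy Ht; rewrite hM in Hx Hy.
  have Hm : mcg h (tau r s (x1,x2,x3,x4)) (tau r s (y1,y2,y3,y4)).
    move=> i j; move: (Ht i j); rewrite hM => /eqP; rewrite eqz_mod_dvd => /dvdzP [k Hk].
    by exists k; apply: (comb5 1 0 0 0 0 Hk Z0 Z0 Z0 Z0); ring.
  have Hxy := tau_inj He Hm.
  have [E1 E2 E3 E4] := coords_conv Hx Hy Hxy.
  rewrite zcomb_sub inmH_zcomb; apply/cg4_sub0; rewrite hM; by split.
split.
  move=> A; have [x1 [x2 [x3 [x4 HA]]]] := tau_surj r s He A.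
  exists (std R (x1,x2,x3,x4)), (x1,x2,x3,x4); split.
  - by rewrite std_zcomb; do 4 eexists.
  - by rewrite std_zcomb; apply/rep_zcomb; split; apply: cg_refl.
  - exact: mcg_eqmx hM HA.
move=> q [[[x1 x2] x3] x4] [a [b [c [d ->]]]] /rep_zcomb Hx; rewrite hM in Hx.
exists (Nf a b c d); split; first by rewrite qnorm_zcomb.
case: Hx => [[k1 ->] [k2 ->] [k3 ->] [k4 ->]].
rewrite hM; apply: cg_mod; exact: tau_det He _ _ _ _ _ _ _ _.
Qed.
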